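(* Suppose $\underline{\mathcal Z}\subseteq\ell^1(\mathcal Z)$. Then a linear functional $H:\underline{\mathcal Z}\to\mathcal Y$ has the $1$-weighted FMP if and only if it has a (proper) convolution representation $\underline\kappa$ satisfying $\lim_{t\to-\infty}\|\kappa_t\|_{op}=0$.
   Context: Let $(\mathcal Z,\|\cdot\|)$ and $(\mathcal Y,\|\cdot\|_{\mathcal Y})$ be normed vector spaces over $\mathbb R$ and $\mathcal B=\{z\in\mathcal Z:\|z\|\le1\}$. Let $\mathbb Z_-=\{0,-1,-2,\dots\}$; elements of $\mathcal Z^{\mathbb Z_-}$ are sequences $\underline z=(z_t)_{t\le0}$. For $t\in\mathbb Z_-$, $\delta^t:\mathcal Z\to\mathcal Z^{\mathbb Z_-}$ maps $z$ to the sequence whose entry at time $t$ is $z$ and all other entries are $0$. Standing assumption: $\underline{\mathcal Z}\subseteq\mathcal Z^{\mathbb Z_-}$ is a set such that (a) $\underline{\mathcal Z}$ is convex and $\underline{\mathcal Z}=\{-\underline z:\underline z\in\underline{\mathcal Z}\}$; (b) $\delta^t(\mathcal B)\subseteq\underline{\mathcal Z}$ for all $t\in\mathbb Z_-$; (c) for every $\underline z\in\underline{\mathcal Z}$ and every $J\subseteq\mathbb Z_-$, the sequence $\sum_{t\in J}\delta^t(z_t)$ (equal to $z_t$ at times $t\in J$ and $0$ elsewhere) belongs to $\underline{\mathcal Z}$. A functional $H:\underline{\mathcal Z}\to\mathcal Y$ is linear if it is the restriction of a linear map defined on the linear span of $\underline{\mathcal Z}$. $L(\mathcal Z,\mathcal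 Y)$ is the space of continuous linear maps $\mathcal Z\to\mathcal Y$ with operator norm $\|\cdot\|_{op}$. $H$ has a (proper) convolution representation if there is $\underline\kappa\in L(\mathcal Z,\mathcal Y)^{\mathbb Z_-}$ with $H(\underline z)=\lim_{T\to-\infty}\sum_{t=T}^0\kappa_t(z_t)$ and $\sum_{t\le0}\|\kappa_t(z_t)\|_{\mathcal Y}<\infty$ for all $\underline z\in\underline{\mathcal Z}$. $\ell^1(\mathcal Z)$ is the set of $\underline z$ with $\|\underline z\|_1=\sum_{t\le0}\|z_t\|<\infty$. A weighting sequence is a monotone $\underline w\in(0,1]^{\mathbb Z_-}$ with $w_t\to0$ as $t\to-\infty$; $\|\underline z\|_{1,\underline w}=\sum_{t\le0}w_t\|z_t\|$. $H$ has the $1$-weighted FMP if $\underline{\mathcal Z}\subseteq\ell^1(\mathcal Z)$ and there exists a weighting sequence $\underline w$ such that $H$ is continuous for the topology induced by $\|\cdot\|_{1,\underline w}$. *)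

(* Defs.v *)
(* Sequences indexed by Z_- = {0,-1,-2,...} are
   encoded as functions nat -> Z, the entry at time t <= 0 being (z (-t)). *)
From HB Require Import structures.
From mathcomp Require Import all_boot all_order all_algebra.
From mathcomp Require Import all_classical all_reals all_analysis.
Set Implicit Arguments. Unset Strict Implicit. Unset Printing Implicit Defensive.
Import Order.TTheory GRing.Theory Num.Theory numFieldNormedType.Exports.
Local Open Scope classical_set_scope.
Local Open Scope ring_scope.

Section Defs.
Variables (R : realType) (Z Y : normedModType R).

(* delta^t z : entry z at time t (index n = -t), 0 elsewhere *)
Definition delta (t : nat) (z : Z) : nat -> Z :=
  fun n => if n == t then z else 0.

Definition standing_assumption (S : set (nat -> Z)) : Prop :=
  [/\ (forall x y (l : R), S x -> S y -> 0 <= l <= 1 ->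
          S (fun n => l *: x n + (1 - l) *: y n)),
      (forall x, S x -> S (fun n => - x n)),
      (forall (t : nat) (z : Z), `|z| <= 1 -> S (delta t z)) &
      (forall x (J : pred nat), S x -> S (fun n => if J n then x n else 0))].

Definition span (S : set (nat -> Z)) : set (nat -> Z) :=
  fun x => exists (k : nat) (a : 'I_k -> R) (v : 'I_k -> nat -> Z),
    (forall i, S (v i)) /\ x = (fun n => \sum_(i < k) a i *: v i n).

Definition linear_on (S : set (nat -> Z)) (H : (nat -> Z) -> Y) : Prop :=
  exists L : (nat -> Z) -> Y,
    (forall x y, span S x -> span S y ->
        L (fun n => x n + y n) = L x + L y) /\
    (forall (a : R) x, span S x -> L (fun n => a *: x n) = a *: L x) /\
    (forall x, S x -> H x = L x).

Definition ell1 : set (nat -> Z) := fun z => cvgn [series `|z n|]_n.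

(* weighting sequence: values in (0,1], monotone (necessarily nonincreasing
   in n = -t), tending to 0 as t -> -oo *)
Definition weighting (w : nat -> R) : Prop :=
  [/\ (forall n, 0 < w n <= 1),
      (forall m n, (m <= n)%N -> w n <= w m) &
      w @ \oo --> 0].

Definition wnorm (w : nat -> R) (z : nat -> Z) : R :=
  limn [series w n * `|z n|]_n.

Definition wcontinuous_on (w : nat -> R) (S : set (nat -> Z))
    (H : (nat -> Z) -> Y) : Prop :=
  forall z0, S z0 -> forall eps : R, 0 < eps -> exists2 d : R, 0 < d &
    forall z, S z -> wnorm w (fun n => z n - z0 n) < d -> `|H z - H z0| < eps.

Definition weighted_FMP1 (S : set (nat -> Z)) (H : (nat -> Z) -> Y) : Prop :=
  S `<=` ell1 /\ exists w, weighting w /\ wcontinuous_on w S H.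

Definition opnorm (f : Z -> Y) : R := sup [set `|f z| | z in [set z | `|z| <= 1]].

Definition conv_rep (S : set (nat -> Z)) (H : (nat -> Z) -> Y)
    (k : nat -> Z -> Y) : Prop :=
  (forall t, linear (k t) /\ continuous (k t)) /\
  forall z, S z ->
    [series k n (z n)]_n @ \oo --> H z /\ cvgn [series `|k n (z n)|]_n.

End Defs.
Arguments ell1 {R Z}.

(* Main.v *)
Require Import Defs.
From HB Require Import structures.
From mathcomp Require Import all_boot all_order all_algebra.
From mathcomp Require Import all_classical all_reals all_analysis.
Import Order.TTheory GRing.Theory Num.Theory numFieldNormedType.Exports.
Local Open Scope classical_set_scope.
Local Open Scope ring_scope.
Set Implicit Arguments. Unset Strict Implicit. Unset Printing Implicit Defensive.

Section Aux.
Variables (R : realType) (Z Y : normedModType R).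

Lemma lin0 (f : Z -> Y) : linear f -> f 0 = 0.
Proof.
move=> lf; have := lf (-1) 0 0.
by rewrite scaler0 addr0 scaleN1r addNr.
Qed.

Lemma linZ (f : Z -> Y) a u : linear f -> f (a *: u) = a *: f u.
Proof. by move=> lf; have := lf a u 0; rewrite addr0 lin0 // addr0. Qed.

Lemma linD (f : Z -> Y) u v : linear f -> f (u + v) = f u + f v.
Proof. by move=> lf; have := lf 1 u v; rewrite !scale1r. Qed.

Lemma linB (f : Z -> Y) u v : linear f -> f (u - v) = f u - f v.
Proof.
move=> lf; rewrite linD // -scaleN1r linZ // scaleN1r //.
Qed.

Lemma opnorm_bound (f : Z -> Y) : linear f -> continuous f ->
  has_ubound [set `|f z| | z in [set z : Z | `|z| <= 1]] /\
  forall z, `|f z| <= opnorm f * `|z|.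
Proof.
move=> lf cf.
have hub : has_ubound [set `|f z| | z in [set z : Z | `|z| <= 1]].
  have := cf 0; move/cvgrPdist_lt/(_ 1 ltr01)/nbhs_ballP => [r /= r0 hr].
  exists (2 / r) => _ [z /= z1 <-].
  have : ball (0:Z) r ((r / 2) *: z).
    rewrite -ball_normE /= sub0r normrN normrZ ger0_norm ?divr_ge0 ?ltW //.
    apply: (@le_lt_trans _ _ (r/2)); first by rewrite ler_piMr // divr_ge0 // ltW.
    by rewrite ltr_pdivrMr // ltr_pMr // ltr1n.
  move/hr => /=; rewrite lin0 // sub0r normrN linZ // normrZ.
  rewrite ger0_norm; last by rewrite divr_ge0 // ltW.
  move=> h; apply: ltW; rewrite ltr_pdivlMr // mulrC.
  have -> : 2 = 2 * 1 :> R by rewrite mulr1.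
  by rewrite -ltr_pdivrMl ?ltr0n // mulrA (mulrC _ r).
split => // z.
have [->|z0] := eqVneq z 0; first by rewrite lin0 // !normr0 mulr0.
have nz : 0 < `|z| by rewrite normr_gt0.
have e : z = `|z| *: (`|z|^-1 *: z) by rewrite scalerA mulfV ?gt_eqF // scale1r.
rewrite {1}e linZ // normrZ normr_id mulrC ler_pM2r //.
apply: ub_le_sup => //; exists (`|z|^-1 *: z) => //=.
by rewrite normrZ normfV normr_id mulVf ?gt_eqF.
Qed.


Lemma series_nd (u : R^nat) : (forall n, 0 <= u n) -> nondecreasing_seq (series u).
Proof.
move=> u0; apply/nondecreasing_seqP => n; rewrite /series /= big_nat_recr //=.
by rewrite lerDl.
Qed.

Lemma nn_series_cvg (u : R^nat) B : (forall n, 0 <= u n) ->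
  (forall N, series u N <= B) -> cvgn (series u) /\ limn (series u) <= B.
Proof.
move=> u0 uB.
have c : cvgn (series u).
  by apply: nondecreasing_is_cvgn; [exact: series_nd|exists B => _ [N _ <-]].
split => //; apply: limr_le => //; exact: nearW.
Qed.

Lemma series_le_lim (u : R^nat) : (forall n, 0 <= u n) -> cvgn (series u) ->
  forall N, series u N <= limn (series u).
Proof. by move=> u0 c; apply: nondecreasing_cvgn_le => //; exact: series_nd. Qed.

Lemma lip_cont (f : Z -> Y) C : linear f -> 0 <= C ->
  (forall z, `|f z| <= C * `|z|) -> continuous f.
Proof.
move=> lf C0 hC x; apply/cvgrPdist_lt => e e0; apply/nbhs_ballP.
exists (e / (C + 1)) => /=; first by rewrite divr_gt0 // ltr_wpDl.
move=> y; rewrite -ball_normE /= => hy.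
rewrite -linB //; apply: (le_lt_trans (hC _)).
apply: (@le_lt_trans _ _ ((C + 1) * `|x - y|)).
  by rewrite ler_wpM2r // lerDl.
by rewrite mulrC -ltr_pdivlMr // ltr_wpDl.
Qed.

End Aux.


Section Back.
Variables (R : realType) (Z Y : normedModType R).

Lemma opnorm_ge0 (f : Z -> Y) : linear f -> continuous f -> 0 <= opnorm f.
Proof.
move=> lf cf; have [hub _] := opnorm_bound lf cf.
apply: le_trans (ub_le_sup hub _); first exact: (normr_ge0 (f 0)).
by exists 0 => //=; rewrite normr0.
Qed.

Lemma conv_to_fmp (S : set (nat -> Z)) (H : (nat -> Z) -> Y) (k : nat -> Z -> Y) :
  S `<=` ell1 -> conv_rep S H k -> opnorm (k n) @[n --> \oo] --> 0 ->
  weighted_FMP1 S H.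
Proof.
move=> Sl1 [kl kS] kc; split => //.
pose u n := opnorm (k n).
have u0 n : 0 <= u n by apply: opnorm_ge0; case: (kl n).
have ku n z : `|k n z| <= u n * `|z|.
  by case: (kl n) => l c; case: (opnorm_bound l c).
have uub : has_ubound (range u).
  by apply: bounded_fun_has_ubound; apply: cvg_seq_bounded; apply/cvg_ex; exists 0.
pose a := sups u.
have ua n : u n <= a n.
  apply: ub_le_sup; last by exists n => /=.
  case: uub => M hM; exists M => _ [m _ <-]; apply: hM; by exists m.
have ani : nonincreasing_seq a by exact: nonincreasing_sups.
have a0 : a @ \oo --> 0 by exact: cvg_sups.
pose C := a 0%N + 2.
have C0 : 0 < C by rewrite /C ltr_wpDl // (le_trans (u0 0%N)).
pose w n := (a n + (n.+1%:R)^-1) / C.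
have wpos n : 0 < w n <= 1.
  apply/andP; split.
    by rewrite divr_gt0 // ltr_wpDl ?invr_gt0 ?ltr0n // (le_trans (u0 n)).
  rewrite ler_pdivrMr // mul1r /C lerD //; first exact: ani.
  have h1 : (1:R) <= 2 by rewrite ler1n.
  by apply: le_trans h1; rewrite invr_le1 ?ler1n ?unitfE ?pnatr_eq0 ?ltr0n.
have aw n : a n <= C * w n.
  rewrite /w mulrC -mulrA mulVf ?gt_eqF // mulr1 lerDl invr_ge0 //.
exists w; split.
  split => //.
  - move=> m n mn; rewrite /w ler_pM2r ?invr_gt0 // lerD //; first exact: ani.
    by rewrite lef_pV2 ?posrE ?ltr0n // ler_nat.
  - have := cvgMr_tmp (b := C^-1) (cvgD a0 cvg_harmonic).
    by rewrite addr0 mul0r; apply.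
move=> z0 Sz0 e e0; exists (e / C); first by rewrite divr_gt0.
move=> z Sz hw.
have [hz _] := kS z Sz; have [hz0 _] := kS z0 Sz0.
pose d n := z n - z0 n.
have cvd : [series k n (d n)]_n @ \oo --> H z - H z0.
  have -> : [series k n (d n)]_n =
      (fun N => [series k n (z n)]_n N - [series k n (z0 n)]_n N).
    apply/funext => N; rewrite /series /= -sumrB; apply: eq_bigr => i _.
    by rewrite /d linB //; case: (kl i).
  exact: cvgB hz hz0.
have cwd : cvgn [series w n * `|d n|]_n.
  have lz := Sl1 _ Sz; have lz0 := Sl1 _ Sz0.
  apply: (fun h1 h2 => (@nn_series_cvg R (fun n => w n * `|d n|) (limn [series `|z n|]_n + limn [series `|z0 n|]_n) h1 h2).1).
    by move=> n; rewrite mulr_ge0 // ltW //; case/andP: (wpos n).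
  move=> N; apply: le_trans (lerD (series_le_lim _ lz N) (series_le_lim _ lz0 N)) => //.
  rewrite /series /= -big_split /=; apply: ler_sum => n _.
  apply: le_trans (ler_normB _ _).
  by rewrite ler_piMl //; case/andP: (wpos n).
  by move=> ?; exact: normr_ge0.
  by move=> ?; exact: normr_ge0.
have hb : `|H z - H z0| <= C * wnorm w d.
  apply: (ler_cvg_to (cvg_norm cvd) (cvg_cst _)); apply: nearW => M /=.
  apply: le_trans (ler_norm_sum _ _ _) _.
  apply: le_trans (_ : \sum_(0 <= n < M) C * (w n * `|d n|) <= _).
    apply: ler_sum => n _; apply: le_trans (ku _ _) _; rewrite mulrA ler_wpM2r //.
    exact: le_trans (ua n) (aw n).
  rewrite -mulr_sumr ler_wpM2l ?(ltW C0) //.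
  apply: (series_le_lim _ cwd M) => n; rewrite mulr_ge0 // ltW //; by case/andP: (wpos n).
apply: le_lt_trans hb _.
by rewrite mulrC -ltr_pdivlMr.
Qed.

End Back.


Section Forth.
Variables (R : realType) (Z Y : normedModType R).

Lemma sum_delta (c : R) t N : 
  \sum_(0 <= m < N) (if m == t then c else 0) = if (t < N)%N then c else 0.
Proof.
elim: N => [|N IH]; first by rewrite big_geq.
rewrite big_nat_recr //= IH.
case: (ltngtP t N) => h.
- by rewrite ltnS ltnW // addr0.
- by rewrite ltnS leqNgt h addr0.
- by rewrite h ltnSn add0r.
Qed.

Lemma sum_tail (a : R^nat) N M :
  \sum_(0 <= m < M + N) (if (m < N)%N then 0 else a m) =
  \sum_(0 <= m < M + N) a m - \sum_(0 <= m < N) a m.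
Proof.
rewrite (@big_cat_nat _ _ _ N 0 (M + N)) ?leq_addl /=.
rewrite [X in _ = X - _](@big_cat_nat _ _ _ N 0 (M + N)) ?leq_addl /=.
rewrite big1_seq ?add0r; last first.
  by move=> i /andP[_]; rewrite mem_index_iota => /andP[_ ->].
rewrite addrAC subrr add0r; apply: eq_big_nat => i /andP[h _].
  by rewrite ltnNge h.
by [].
by [].
by [].
by [].
Qed.


Lemma fmp_to_conv (S : set (nat -> Z)) (H : (nat -> Z) -> Y) :
  standing_assumption S -> S `<=` ell1 -> linear_on S H -> weighted_FMP1 S H ->
  exists k : nat -> Z -> Y, conv_rep S H k /\ opnorm (k n) @[n --> \oo] --> 0.
Proof.
move=> [Sconv Sneg Sdel Scut] Sl1 [L [Ladd [Lsc HL]]] [_ [w [[w01 wmono w0] wc]]].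
pose zero := fun _ : nat => (0 : Z).
have S0 : S zero.
  have e : delta 0 (0 : Z) = zero.
    by apply/funext => n; rewrite /delta /zero; case: ifP.
  by rewrite -e; apply: Sdel; rewrite normr0.
have spanS x : S x -> Defs.span S x.
  move=> Sx; exists 1%N, (fun _ => 1), (fun _ => x); split => //.
  by apply/funext => n; rewrite big_ord1 scale1r.
have spandel t z : Defs.span S (delta t z).
  have p : 0 < `|z| + 1 by rewrite ltr_wpDl.
  exists 1%N, (fun _ => `|z| + 1), (fun _ => delta t ((`|z| + 1)^-1 *: z)); split.
    move=> _; apply: Sdel; rewrite normrZ normfV ger0_norm ?(ltW p) //.
    by rewrite mulrC ler_pdivrMr // mul1r lerDl.
  apply/funext => n; rewrite big_ord1 /delta; case: ifP => _.
    by rewrite scalerA mulfV ?gt_eqF // scale1r.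
  by rewrite scaler0.
have L0 : L zero = 0.
  have := Lsc 0 zero (spanS _ S0); rewrite scale0r => <-.
  by congr L; apply/funext => n; rewrite scale0r.
have H0 : H zero = 0 by rewrite HL.
pose k t z := L (delta t z).
have kS t z : `|z| <= 1 -> k t z = H (delta t z).
  by move=> h; rewrite HL //; apply: Sdel.
have klin t : linear (k t).
  move=> a u v; rewrite /k.
  have -> : delta t (a *: u + v) = (fun n => delta t (a *: u) n + delta t v n).
    by apply/funext => n; rewrite /delta; case: ifP; rewrite ?addr0.
  rewrite (Ladd _ _ (spandel _ _) (spandel _ _)).
  have -> : delta t (a *: u) = (fun n => a *: delta t u n).
    by apply/funext => n; rewrite /delta; case: ifP; rewrite ?scaler0.
  by rewrite Lsc.
have wd t z : wnorm w (fun n => delta t z n - zero n) <= w t * `|z|.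
  apply: (@nn_series_cvg R _ _ _ _).2.
    by move=> n; rewrite mulr_ge0 // ltW //; case/andP: (w01 n).
  move=> N; rewrite /series /=.
  rewrite (eq_bigr (fun m => if m == t then w t * `|z| else 0)); last first.
    move=> m _; rewrite /delta /zero subr0; case: eqP => [->|_] //.
    by rewrite normr0 mulr0.
  rewrite sum_delta; case: ifP => // _.
  by rewrite mulr_ge0 // ltW //; case/andP: (w01 t).
have [d d0 hd] := wc zero S0 1 ltr01.
pose c := Num.min (d / 2) 1.
have c0 : 0 < c by rewrite lt_min ltr01 divr_gt0.
have c1 : c <= 1 by rewrite ge_min lexx orbT.
have cd : c < d.
  apply: le_lt_trans (_ : d / 2 < d); first by rewrite ge_min lexx.
  by rewrite ltr_pdivrMr // ltr_pMr // ltr1n.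
have kb1 t z : `|z| <= 1 -> `|k t z| <= c^-1.
  move=> z1.
  have cz : `|c *: z| <= 1.
    by rewrite normrZ ger0_norm ?(ltW c0) // -[1]mulr1 ler_pM // ltW.
  have := hd _ (Sdel t _ cz).
  rewrite H0 subr0 -kS // (linZ _ _ (klin t)) normrZ ger0_norm ?(ltW c0) //.
  move=> h; rewrite -(ler_pM2l c0) mulfV ?gt_eqF // ltW //; apply: h.
  apply: le_lt_trans (wd _ _) _; apply: le_lt_trans cd.
  case/andP: (w01 t) => wt0 wt1.
  rewrite normrZ ger0_norm ?(ltW c0) //.
  apply: le_trans (_ : 1 * (c * 1) <= c); last by rewrite mul1r mulr1.
  apply: ler_pM => //; [exact: ltW | by rewrite mulr_ge0 ?(ltW c0) | by rewrite ler_pM2l].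
have kb t z : `|k t z| <= c^-1 * `|z|.
  have [->|z0] := eqVneq z 0; first by rewrite (lin0 (klin t)) !normr0 mulr0.
  have nz : 0 < `|z| by rewrite normr_gt0.
  have e : z = `|z| *: (`|z|^-1 *: z) by rewrite scalerA mulfV ?gt_eqF // scale1r.
  rewrite {1}e (linZ _ _ (klin t)) normrZ normr_id mulrC ler_pM2r //.
  by apply: kb1; rewrite normrZ normfV normr_id mulVf ?gt_eqF.
have kcont t : continuous (k t).
  by apply: (lip_cont (klin t)) (kb t); rewrite invr_ge0 ltW.
exists k; split; last first.
  apply/cvgrPdist_lt => e e0.
  have e20 : 0 < e / 2 by rewrite divr_gt0.
  have [d2 d20 hd2] := wc zero S0 _ e20.
  move: w0 => /cvgrPdist_lt/(_ d2 d20); apply: filterS => n hn.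
  rewrite sub0r normrN ger0_norm ?(opnorm_ge0 (klin n) (kcont n)) //.
  apply: le_lt_trans (_ : e / 2 < e); last first.
    by rewrite ltr_pdivrMr // ltr_pMr // ltr1n.
  apply: ge_sup; first by exists `|k n 0|, 0 => //=; rewrite normr0.
  move=> _ [z /= z1 <-].
  rewrite kS // -(subr0 (H _)) -H0; apply: ltW; apply: hd2; first exact: Sdel.
  apply: le_lt_trans (wd _ _) _.
  move: hn; rewrite sub0r normrN ger0_norm; last by rewrite ltW //; case/andP: (w01 n).
  apply: le_lt_trans; rewrite ler_piMr //; last by rewrite ltW //; case/andP: (w01 n).
split; first by move=> t; split; [exact: klin|exact: kcont].
move=> z Sz.
pose T N := fun n => if (n < N)%N then z n else 0.
have ST N : S (T N) by apply: (Scut z (fun n => (n < N)%N)).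
have ps N : [series k n (z n)]_n N = H (T N).
  rewrite HL // /series /=.
  elim: N => [|N IH].
    by rewrite big_geq // -L0; congr L.
  rewrite big_nat_recr //= IH /k -Ladd ?spandel ?spanS //.
  congr L; apply/funext => n; rewrite /T /delta.
  case: (ltngtP n N) => h.
  - by rewrite ltnS ltnW // addr0.
  - by rewrite ltnS leqNgt h addr0.
  - by rewrite h ltnSn add0r.
  exact: spanS.
have lz := Sl1 _ Sz.
have az n : 0 <= `|z n| by [].
split.
  apply/cvgrPdist_lt => e e0.
  have [d' d'0 hd'] := wc z Sz e e0.
  have tail : (fun N => limn [series `|z n|]_n - [series `|z n|]_n N) @ \oo --> 0.
    rewrite -(subrr (limn [series `|z n|]_n)); apply: cvgB => //; exact: cvg_cst.
  move: tail => /cvgrPdist_lt/(_ d' d'0); apply: filterS => N hN.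
  rewrite ps distrC; apply: hd' => //.
  apply: (@le_lt_trans _ _ (limn [series `|z n|]_n - [series `|z n|]_n N)); last first.
    by apply: le_lt_trans hN; rewrite sub0r normrN ler_norm.
  apply: (@nn_series_cvg R _ _ _ _).2.
    by move=> n; rewrite mulr_ge0 // ltW //; case/andP: (w01 n).
  move=> M; rewrite /series /=.
  apply: le_trans (_ : \sum_(0 <= m < M) (if (m < N)%N then 0 else `|z m|) <= _).
    apply: ler_sum => m _; rewrite /T; case: ifP => _.
      by rewrite subrr normr0 mulr0.
    by rewrite sub0r normrN ler_piMl //; case/andP: (w01 m).
  apply: le_trans (_ : \sum_(0 <= m < M + N) (if (m < N)%N then 0 else `|z m|) <= _).
    rewrite (@big_cat_nat _ _ _ M 0 (M + N)) ?leq_addr //= lerDl.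
    by apply: sumr_ge0 => m _; case: ifP.
  rewrite sum_tail lerB //.
  exact: (series_le_lim az lz (M + N)).
apply: (fun h1 h2 => (@nn_series_cvg R (fun n => `|k n (z n)|) (c^-1 * limn [series `|z n|]_n) h1 h2).1) => // N.
rewrite /series /=.
apply: le_trans (_ : \sum_(0 <= n < N) c^-1 * `|z n| <= _).
  by apply: ler_sum => n _; exact: kb.
rewrite -mulr_sumr ler_wpM2l ?invr_ge0 ?(ltW c0) //.
exact: (series_le_lim az lz N).
Qed.

End Forth.


Unset Implicit Arguments.
Theorem proposition3p5 (R : realType) (Z Y : normedModType R)
    (S : set (nat -> Z)) (H : (nat -> Z) -> Y) :
  standing_assumption S -> S `<=` ell1 -> linear_on S H ->
  (weighted_FMP1 S H <->
   exists k : nat -> Z -> Y, conv_rep S H k /\ opnorm (k n) @[n --> \oo] --> 0).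
Proof.
move=> sa Sl1 lH; split.
  exact: fmp_to_conv.
by move=> [k [ck kc]]; exact: (conv_to_fmp Sl1 ck kc).
Qed.
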